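(* Let $f_1,\dots,f_P:\mathbb{R}^n\to\mathbb{R}$ be continuously differentiable with Lipschitz continuous gradients, and let $f=\sum_{i=1}^P f_i$. Let $\{\zeta^k\}\subset\mathbb{R}_+$ be a sequence of positive step sizes with $\lim_{k\to\infty}\zeta^k=0$, and let $\{w^k\}\subset\mathbb{R}^n$ be a bounded sequence. For every $k$, let $(\widetilde w^k,d^k,\tilde f^k)=\texttt{Inner\_Cycle}(w^k,\zeta^k)$, with intermediate points $\widetilde w^k_0,\dots,\widetilde w^k_P$. Then for any limit point $\bar w$ of $\{w^k\}$ there exists an infinite index set $K$ such that \[ \lim_{k\to\infty,k\in K} w^k=\bar w,\qquad \lim_{k\to\infty,k\in K}\zeta^k=0,\qquad \lim_{k\to\infty,k\in K}\widetilde w^k_i=\bar w\ \text{ for all } i=1,\dots,P, \] \[ \lim_{k\to\infty,k\in K} d^k=-\nabla f(\bar w),\qquad \lim_{k\to\infty,k\in K}\tilde f^k=f(\bar w). \]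
   Context: The procedure $\texttt{Inner\_Cycle}(w,\zeta)$ (one epoch of the incremental gradient method) is defined as follows: set $\widetilde w_0=w$; for $i=1,\dots,P$ set $\tilde f_i=f_i(\widetilde w_{i-1})$, $\tilde d_i=-\nabla f_i(\widetilde w_{i-1})$, $\widetilde w_i=\widetilde w_{i-1}+\zeta\tilde d_i$. It outputs $\widetilde w=\widetilde w_P$, the direction $d=\sum_{i=1}^P\tilde d_i$, and the function estimate $\tilde f=\sum_{i=1}^P\tilde f_i=\sum_{i=1}^P f_i(\widetilde w_{i-1})$. When applied to $(w^k,\zeta^k)$ the intermediate points are denoted $\widetilde w^k_i$ and the outputs $\widetilde w^k,d^k,\tilde f^k$. *)

(* Defs.v *)
(* R^n is modelled as row vectors 'rV[R]_n. *)
From HB Require Import structures.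
From mathcomp Require Import all_boot all_order all_algebra.
From mathcomp Require Import all_classical all_reals all_analysis.
Set Implicit Arguments. Unset Strict Implicit. Unset Printing Implicit Defensive.
Import Order.TTheory GRing.Theory Num.Theory.
Import numFieldNormedType.Exports.
Local Open Scope ring_scope.

Section Defs.
Variables (R : realType) (n : nat).

Definition grad (f : 'rV[R]_n -> R) (x : 'rV[R]_n) : 'rV[R]_n :=
  \row_(j < n) ('D_(delta_mx 0 j) f x).

(* Inner_Cycle. The component functions f_1,...,f_P are represented by
   fs 0, ..., fs (P-1) (0-based indexing). *)
Fixpoint inner_pt (fs : nat -> 'rV[R]_n -> R) (zeta : R) (w : 'rV[R]_n)
    (i : nat) : 'rV[R]_n :=
  match i with
  | 0 => w
  | i'.+1 => let v := inner_pt fs zeta w i' in v + zeta *: (- grad (fs i') v)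
  end.

Definition inner_w (P : nat) (fs : nat -> 'rV[R]_n -> R) (zeta : R) (w : 'rV[R]_n) := inner_pt fs zeta w P.
Definition inner_d (P : nat) (fs : nat -> 'rV[R]_n -> R) (zeta : R) (w : 'rV[R]_n) :=
  \sum_(i < P) (- grad (fs (nat_of_ord i)) (inner_pt fs zeta w i)).
Definition inner_f (P : nat) (fs : nat -> 'rV[R]_n -> R) (zeta : R) (w : 'rV[R]_n) :=
  \sum_(i < P) fs (nat_of_ord i) (inner_pt fs zeta w i).

Definition lipschitz_map (g : 'rV[R]_n -> 'rV[R]_n) :=
  exists L : R, forall x y, `|g x - g y| <= L * `|x - y|.

End Defs.

Section Seq.
Variables (R : realType) (V : normedModType R).

Definition seq_limit_point (u : nat -> V) (lbar : V) :=
  forall e : R, 0 < e -> forall N : nat, exists k, (N <= k)%N /\ `|u k - lbar| < e.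

Definition infinite_index (K : nat -> bool) := forall m : nat, exists k, (m <= k)%N /\ K k.

Definition lim_along (K : nat -> bool) (u : nat -> V) (l : V) :=
  forall e : R, 0 < e -> exists N : nat, forall k, (N <= k)%N -> K k -> `|u k - l| < e.

End Seq.

(* Main.v *)
Require Import Defs.
From HB Require Import structures.
From mathcomp Require Import all_boot all_order all_algebra.
From mathcomp Require Import all_classical all_reals all_analysis.
From mathcomp Require Import zify.
Import Order.TTheory GRing.Theory Num.Theory.
Import numFieldNormedType.Exports.
Local Open Scope ring_scope.

Fixpoint mkg (h : nat * nat -> nat) (m : nat) : nat :=
  match m with 0 => h (0, 0)%N | m'.+1 => h (m'.+1, (mkg h m').+1) end.

Lemma cvg_sum_ord (R : realType) (V : normedModType R) (T : Type) (F : set_system T)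
  (FF : Filter F) (m : nat) (u : 'I_m -> T -> V) (l : 'I_m -> V) :
  (forall i, (u i x @[x --> F] --> l i)%classic) ->
  ((\sum_(i < m) u i x) @[x --> F] --> \sum_(i < m) l i)%classic.
Proof.
elim: m u l => [|m IH] u l H.
  rewrite big_ord0; under eq_fun do rewrite big_ord0; exact: cvg_cst.
rewrite big_ord_recr /=; under eq_fun do rewrite big_ord_recr /=.
apply: cvgD; last exact: H.
exact: (IH (fun i => u (widen_ord (leqnSn m) i)) (fun i => l (widen_ord (leqnSn m) i))).
Qed.

Lemma along (R : realType) (V : normedModType R) (u : nat -> V) (l : V) (g : nat -> nat) :
  (forall m, (g m < g m.+1)%N) -> ((u (g m)) @[m --> \oo] --> l)%classic ->
  lim_along (fun k => `[< exists m, g m = k >]) u l.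
Proof.
move=> gS /cvgrPdist_lt H e e0; have [N _ HN] := H e e0.
have mono : forall a b, (a < b)%N -> (g a < g b)%N.
  move=> a; elim=> // b IH; rewrite ltnS leq_eqVlt => /orP [/eqP -> //| /IH] hab.
  exact: ltn_trans hab (gS b).
exists (g N) => k Hk /asboolP [m gmk]; rewrite -gmk distrC; apply: HN => /=.
rewrite leqNgt; apply/negP => /mono; rewrite gmk; lia.
Qed.

Theorem proposition1 (R : realType) (n P : nat) (fs : nat -> 'rV[R]_n -> R)
  (zeta : nat -> R) (w : nat -> 'rV[R]_n) (wbar : 'rV[R]_n) :
  (forall i, (i < P)%N -> forall x, differentiable (fs i) x) ->
  (forall i, (i < P)%N -> continuous (grad (fs i))) ->
  (forall i, (i < P)%N -> lipschitz_map (grad (fs i))) ->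
  (forall k, 0 < zeta k) ->
  (zeta @ \oo --> (0 : R))%classic ->
  (exists M : R, forall k, `|w k| <= M) ->
  seq_limit_point w wbar ->
  let f := fun x => \sum_(i < P) fs i x in
  exists K : nat -> bool,
    infinite_index K /\
    [/\ lim_along K w wbar,
        lim_along K zeta 0,
        (forall i, (1 <= i <= P)%N ->
           lim_along K (fun k => inner_pt fs (zeta k) (w k) i) wbar),
        lim_along K (fun k => inner_d P fs (zeta k) (w k)) (- grad f wbar)
      & lim_along K (fun k => inner_f P fs (zeta k) (w k)) (f wbar)].
Proof.
move=> hdiff hcont _ zpos zcvg _ hlp f.
have H : forall p : nat * nat, exists k, (p.2 <= k)%N /\ `|w k - wbar| < (p.1.+1%:R)^-1.
  by move=> [m N]; apply: hlp; rewrite invr_gt0 ltr0n.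
case: (choice H) => h hh.
pose g := mkg h.
have gS : forall m, (g m < g m.+1)%N by move=> m; exact: (hh (m.+1, (g m).+1)).1.
have g0 : forall m, `|w (g m) - wbar| < (m.+1%:R)^-1.
  by case=> [|m]; [exact: (hh (0, 0)%N).2 | exact: (hh _).2].
have gm : forall m, (m <= g m)%N.
  by elim=> // m IH; apply: leq_ltn_trans IH (gS m).
exists (fun k => `[< exists m, g m = k >]); split.
  by move=> m; exists (g m); split => //; apply/asboolP; exists m.
have wg : ((w (g m)) @[m --> \oo] --> wbar)%classic.
  apply/cvgrPdist_lt => e e0; near=> m; rewrite distrC.
  apply: (lt_trans (g0 m)); near: m; exact: (near_infty_natSinv_lt (PosNum e0)).
have zg : ((zeta (g m)) @[m --> \oo] --> (0:R))%classic.
  move/cvgrPdist_lt : zcvg => Hz; apply/cvgrPdist_lt => e e0.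
  have [N _ HN] := Hz e e0; exists N => // m /= Hm; apply: HN => /=.
  exact: leq_trans Hm (gm m).
have pts : forall i, (i <= P)%N ->
    ((inner_pt fs (zeta (g m)) (w (g m)) i) @[m --> \oo] --> wbar)%classic.
  elim=> [_|i IH Hi] /=; first exact: wg.
  rewrite -[X in (_ --> X)%classic](addr0 wbar) -(scale0r (- grad (fs i) wbar)).
  apply: cvgD; first exact: IH (ltnW Hi).
  apply: cvgZ; first exact: zg.
  apply: cvgN; apply: continuous_cvg; first exact: hcont.
  exact: IH (ltnW Hi).
split.
- exact: along.
- exact: along.
- by move=> i /andP [_ Hi]; apply: along => //; exact: pts.
- apply: along => //.
  have -> : - grad f wbar = \sum_(i < P) - grad (fs i) wbar.
    rewrite sumrN; congr (- _); apply/rowP => j.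
    rewrite !mxE summxE.
    under eq_bigr do rewrite mxE.
    rewrite /f -(fct_sumE _ _ (fun i : 'I_P => fs i)).
    apply: derive_sum => i; apply: diff_derivable; exact: hdiff.
  apply: cvg_sum_ord => i.
  apply: cvgN; apply: continuous_cvg; first exact: hcont.
  exact: pts (ltnW (ltn_ord i)).
- apply: along => //.
  apply: cvg_sum_ord => i.
  apply: continuous_cvg; first exact: differentiable_continuous (hdiff _ (ltn_ord i) _).
  exact: pts (ltnW (ltn_ord i)).
Unshelve. all: by end_near.
Qed.
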